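(* Let $\mathcal F=(f_t)$ be a continuous flow on a compact metric space $(X,d)$ and let $\nu$ be an $\mathcal F$-invariant Borel probability measure which is almost expansive at scale $\varepsilon$. Let $s>0$ and $\alpha>0$. Then for all sufficiently small $\rho\in(0,\varepsilon/2)$ the following holds. For each $t>0$ let $\mathscr A_t$ be a partition adapted to a $(t,\rho)$-separated set of maximal cardinality, and let $A\subset X$ be a measurable set with $\nu(A)>0$. Then for every $\kappa>0$ there is $t_0$ such that for every $t\ge t_0$ there is a set $U$ which is a union of elements of $\mathscr A_t$ with $\nu(f_{t/2}U\setminus f_{[-3s,3s]}A)<\kappa$ and $\nu(A\setminus f_{t/2}U)<\alpha$.
   Context: $\Gamma_\varepsilon(x)=\{y: d(f_tx,f_ty)<\varepsilon\ \forall t\in\mathbb{R}\}$; $\mathrm{NE}(\varepsilon)=\{x:\Gamma_\varepsilon(x)\not\subset f_{[-s,s]}(x)\text{ for every } s>0\}$, where $f_{[-s,s]}A=\bigcup_{r\in[-s,s]}f_rA$. $\nu$ is almost expansive at scale $\varepsilon$ if $\nu(\mathrm{NE}(\varepsilon))=0$. Bowen ball $B_t(x,\rho)=\{y:d(f_rx,f_ry)<\rho\ \forall r\in[0,t]\}$. Given a $(t,\rho)$-separated set $E$ of maximal cardinality, a partition $\mathscr A$ is adapted to $E$ if for every $A'\in\mathscr A$ there is $x\in E$ with $B_t(x,\rho/2)\subset A'\subset\overline{B_t}(x,\rho)$. *)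

(* Defs.v *)
From HB Require Import structures.
From mathcomp Require Import all_boot all_order all_algebra.
From mathcomp Require Import all_classical all_reals all_analysis.
Set Implicit Arguments. Unset Strict Implicit. Unset Printing Implicit Defensive.
Import Order.TTheory GRing.Theory Num.Theory.
Local Open Scope classical_set_scope.
Local Open Scope ring_scope.

Section Defs.
Context {R : realType} {X : Type}.
Variable (dist : X -> X -> R).

Definition is_metric : Prop :=
  (forall x y, dist x y = 0 <-> x = y) /\
  (forall x y, dist x y = dist y x) /\
  (forall x y z, dist x z <= dist x y + dist y z).

Definition mopen (U : set X) : Prop :=
  forall x, U x -> exists2 r : R, 0 < r & [set y | dist x y < r] `<=` U.

Definition mcompact : Prop :=
  forall u : nat -> X, exists phi : nat -> nat,
    (forall n, (phi n < phi n.+1)%N) /\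
    exists l : X, forall e : R, 0 < e ->
      exists N : nat, forall n, (N <= n)%N -> dist (u (phi n)) l < e.

Variable (f : R -> X -> X).

Definition is_cont_flow : Prop :=
  (forall x, f 0 x = x) /\
  (forall s t x, f (s + t) x = f s (f t x)) /\
  (forall t x (e : R), 0 < e -> exists2 del : R, 0 < del &
     forall t' y, `|t' - t| < del -> dist x y < del -> dist (f t x) (f t' y) < e).

Definition flow_tube (s : R) (A : set X) : set X :=
  [set y | exists r : R, -s <= r <= s /\ exists2 a, A a & f r a = y].

Definition Gamma (eps : R) (x : X) : set X :=
  [set y | forall t : R, dist (f t x) (f t y) < eps].

Definition NE (eps : R) : set X :=
  [set x | forall s : R, 0 < s -> ~ (Gamma eps x `<=` flow_tube s [set x])].

Definition bowen (t rho : R) (x : X) : set X :=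
  [set y | forall r : R, 0 <= r <= t -> dist (f r x) (f r y) < rho].

Definition cbowen (t rho : R) (x : X) : set X :=
  [set y | forall r : R, 0 <= r <= t -> dist (f r x) (f r y) <= rho].

Definition separated (t rho : R) (E : set X) : Prop :=
  forall x y, E x -> E y -> x <> y -> ~ bowen t rho x y.

Definition max_separated (t rho : R) (E : set X) : Prop :=
  separated t rho E /\ forall E', separated t rho E' -> card_le E' E.

End Defs.

Section MeasDefs.
Context {R : realType} {disp : measure_display} {X : measurableType disp}.

Definition mpartition (P : set (set X)) : Prop :=
  (forall B, P B -> measurable B) /\
  (forall B C, P B -> P C -> B <> C -> B `&` C = set0) /\
  \bigcup_(B in P) B = setT.

Definition adapted (dist : X -> X -> R) (f : R -> X -> X) (t rho : R)
    (E : set X) (P : set (set X)) : Prop :=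
  mpartition P /\
  forall B, P B -> exists2 x, E x &
    bowen dist f t (rho / 2) x `<=` B /\ B `<=` cbowen dist f t rho x.

(* outer-measure bound: nu^*(S) < c (S need not be measurable a priori) *)
Definition outer_lt (nu : set X -> \bar R) (S : set X) (c : R) : Prop :=
  exists B, [/\ measurable B, S `<=` B & (nu B < c%:E)%E].

End MeasDefs.

(* Main.v *)
Require Import Defs.
From HB Require Import structures.
From mathcomp Require Import all_boot all_order all_algebra.
From mathcomp Require Import all_classical all_reals all_analysis.
From mathcomp Require Import lra.
Import Order.TTheory GRing.Theory Num.Theory.
Import numFieldNormedType.Exports.
Set Implicit Arguments. Unset Strict Implicit.
Local Open Scope classical_set_scope.
Local Open Scope ring_scope.
Section Metric.
Context {R : realType} {X : Type} (dist : X -> X -> R).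
Hypothesis hm : is_metric dist.

Lemma dist0 x : dist x x = 0. Proof. by case: hm => H _; exact: (proj2 (H x x) erefl). Qed.
Lemma distC x y : dist x y = dist y x. Proof. by case: hm => _ [H _]. Qed.
Lemma dist_tri x y z : dist x z <= dist x y + dist y z. Proof. by case: hm => _ [_ H]. Qed.
Lemma dist_ge0 x y : 0 <= dist x y.
Proof. have := dist_tri x y x; rewrite dist0 (distC y x) => h; lra. Qed.
Lemma dist_eq0 x y : dist x y = 0 -> x = y. Proof. by case: hm => H _; exact: (proj1 (H x y)). Qed.
Lemma dist_le0 x y : (forall e, 0 < e -> dist x y <= e) -> x = y.
Proof.
move=> H; apply: dist_eq0; have := dist_ge0 x y => h0.
have [d0|d0] := lerP (dist x y) 0; first by apply/eqP; rewrite eq_le d0 h0.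
have := H (dist x y / 2) ltac:(lra); lra.
Qed.

Definition conv (u : nat -> X) l := forall e, 0 < e ->
  exists N, forall n, (N <= n)%N -> dist (u n) l < e.
Definition rconv (u : nat -> R) l := forall e, 0 < e ->
  exists N, forall n, (N <= n)%N -> `|u n - l| < e.
Definition sincr (phi : nat -> nat) := forall n, (phi n < phi n.+1)%N.

Lemma sincr_ge phi : sincr phi -> forall n, (n <= phi n)%N.
Proof. by move=> H; elim=> // n IH; apply: leq_ltn_trans IH (H n). Qed.

Lemma sincr_mono phi : sincr phi -> forall m n, (m <= n)%N -> (phi m <= phi n)%N.
Proof.
move=> H m n mn.
have h : forall k, (phi m <= phi (k + m))%N.
  elim=> //= k IH; rewrite addSn; exact: leq_trans IH (ltnW (H _)).
by have := h (n - m)%N; rewrite subnK.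
Qed.

Lemma sincr_comp phi psi : sincr phi -> sincr psi -> sincr (phi \o psi).
Proof. by move=> H1 H2 n; exact: (leq_trans (H1 (psi n)) (sincr_mono H1 (H2 n))). Qed.

Lemma conv_sub u l phi : conv u l -> sincr phi -> conv (u \o phi) l.
Proof.
move=> H Hp e /H [N HN]; exists N => n Nn /=; apply: HN.
exact: leq_trans Nn (sincr_ge Hp n).
Qed.

Lemma rconv_sub (u : nat -> R) l phi : rconv u l -> sincr phi -> rconv (u \o phi) l.
Proof.
move=> H Hp e /H [N HN]; exists N => n Nn /=; apply: HN.
exact: leq_trans Nn (sincr_ge Hp n).
Qed.

Lemma rconv_cst (c : R) : rconv (fun=> c) c.
Proof. by move=> e e0; exists 0%N => n _; rewrite subrr normr0. Qed.

Lemma conv_uniq u l l' : conv u l -> conv u l' -> l = l'.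
Proof.
move=> H1 H2; apply: dist_le0 => e e0.
have [N1 HN1] := H1 (e / 2) ltac:(lra).
have [N2 HN2] := H2 (e / 2) ltac:(lra).
have h1 := HN1 (maxn N1 N2) (leq_maxl _ _).
have h2 := HN2 (maxn N1 N2) (leq_maxr _ _).
have := dist_tri l (u (maxn N1 N2)) l'; rewrite (distC l (u _)) => h; lra.
Qed.

Lemma small_inv (e : R) : 0 < e -> exists N, forall n, (N <= n)%N -> (n.+1%:R)^-1 < e.
Proof.
move=> e0; exists (Num.truncn e^-1) => n Nn.
have h1 := truncnS_gt e^-1.
have h2 : ((Num.truncn e^-1).+1%:R <= n.+1%:R :> R) by rewrite ler_nat ltnS.
rewrite -[e]invrK ltf_pV2 ?posrE ?invr_gt0 //; lra.
Qed.

Definition closedS (F : set X) := mopen dist (~` F).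

Lemma closed_lim F u l : closedS F -> (forall n, F (u n)) -> conv u l -> F l.
Proof.
move=> hF hu hc; have [//|nFl] := pselect (F l).
have [r r0 hr] := hF l nFl.
have [N HN] := hc r r0.
have h := HN N (leqnn N); rewrite distC in h; by case: (hr _ h (hu N)).
Qed.

Lemma seq_closed F : (forall u l, (forall n, F (u n)) -> conv u l -> F l) -> closedS F.
Proof.
move=> H x nFx; apply: contrapT => hn.
have hex : forall n : nat, exists y, dist x y < n.+1%:R^-1 /\ F y.
  move=> n; apply: contrapT => hn2; apply: hn; exists (n.+1%:R^-1) => // y /= hy Fy.
  by apply: hn2; exists y.
have [u hu] := choice hex.
apply: nFx; apply: (H u) => [n|]; first by case: (hu n).
move=> e e0; have [N HN] := small_inv e0; exists N => n Nn.
rewrite distC; case: (hu n) => h _; apply: lt_trans h (HN n Nn).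
Qed.

Lemma dist_lim_le u v l m (c : R) : conv u l -> conv v m ->
  (exists N, forall n, (N <= n)%N -> dist (u n) (v n) <= c) -> dist l m <= c.
Proof.
move=> hu hv [N HN]; rewrite leNgt; apply/negP => hlt.
have [N1 HN1] := hu ((dist l m - c) / 2) ltac:(lra).
have [N2 HN2] := hv ((dist l m - c) / 2) ltac:(lra).
pose n := maxn N (maxn N1 N2).
have h1 := HN1 n (leq_trans (leq_maxl N1 N2) (leq_maxr _ _)).
have h2 := HN2 n (leq_trans (leq_maxr N1 N2) (leq_maxr _ _)).
have h3 := HN n (leq_maxl _ _).
have t1 := dist_tri l (u n) m; have t2 := dist_tri (u n) (v n) m.
rewrite (distC l (u n)) in t1; lra.
Qed.

Lemma dist_lim_ge u v l m (c : R) : conv u l -> conv v m ->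
  (exists N, forall n, (N <= n)%N -> c <= dist (u n) (v n)) -> c <= dist l m.
Proof.
move=> hu hv [N HN]; rewrite leNgt; apply/negP => hlt.
have [N1 HN1] := hu ((c - dist l m) / 2) ltac:(lra).
have [N2 HN2] := hv ((c - dist l m) / 2) ltac:(lra).
pose n := maxn N (maxn N1 N2).
have h1 := HN1 n (leq_trans (leq_maxl N1 N2) (leq_maxr _ _)).
have h2 := HN2 n (leq_trans (leq_maxr N1 N2) (leq_maxr _ _)).
have h3 := HN n (leq_maxl _ _).
have t1 := dist_tri (u n) l (v n); have t2 := dist_tri l m (v n).
rewrite (distC m (v n)) in t2; lra.
Qed.

Lemma BW (r : nat -> R) (S : R) : (forall n, -S <= r n <= S) ->
  exists phi, sincr phi /\ exists2 r0, -S <= r0 <= S & rconv (r \o phi) r0.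
Proof.
move=> hr.
have hb : bounded_fun r.
  exists S; split; first exact: num_real.
  move=> M hM x _ /=; have := hr x; rewrite ler_norml => /andP[h1 h2].
  apply/andP; split; lra.
have [phi hphi hcv] := bolzano_weierstrass hb.
have sp : sincr phi.
  by move=> n; rewrite ltnNge; have := hphi n.+1 n; rewrite /= !leEnat => ->; rewrite ltnn.
set r0 := limn (r \o phi).
have rc : rconv (r \o phi) r0.
  have hc : (r \o phi) @ \oo --> r0 by exact: hcv.
  move=> e e0; move/cvgrPdist_lt: hc => /(_ e e0); case=> N _ HN; exists N => n Nn.
  by rewrite distrC; apply: HN.
exists phi; split => //; exists r0 => //.
apply/andP; split; rewrite leNgt; apply/negP => hlt.
- have [N HN] := rc (- S - r0) ltac:(lra).
  have := HN N (leqnn N); have := hr (phi N); rewrite ltr_norml /= => /andP[h1 h2] /andP[h3 h4]; lra.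
- have [N HN] := rc (r0 - S) ltac:(lra).
  have := HN N (leqnn N); have := hr (phi N); rewrite ltr_norml /= => /andP[h1 h2] /andP[h3 h4]; lra.
Qed.

End Metric.
Section Flow.
Context {R : realType} {X : Type} (dist : X -> X -> R) (f : R -> X -> X).
Hypothesis hm : is_metric dist.
Hypothesis hc : mcompact dist.
Hypothesis hf : is_cont_flow dist f.

Lemma flow0 x : f 0 x = x. Proof. by case: hf. Qed.
Lemma flowD s t x : f (s + t) x = f s (f t x). Proof. by case: hf => _ []. Qed.

Lemma conv_cst (a : X) : conv dist (fun=> a) a.
Proof. by move=> e e0; exists 0%N => n _; rewrite dist0. Qed.

Lemma f_cont (r : nat -> R) r0 (a : nat -> X) a0 : rconv r r0 -> conv dist a a0 ->
  conv dist (fun k => f (r k) (a k)) (f r0 a0).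
Proof.
move=> hr ha e e0; case: hf => _ [_ /(_ r0 a0 e e0) [del del0 H]].
have [N1 HN1] := hr del del0; have [N2 HN2] := ha del del0.
exists (maxn N1 N2) => n Nn; rewrite distC //; apply: H.
- apply: HN1; exact: leq_trans (leq_maxl _ _) Nn.
- rewrite distC //; apply: HN2; exact: leq_trans (leq_maxr _ _) Nn.
Qed.

Lemma f_contx r (a : nat -> X) a0 : conv dist a a0 -> conv dist (fun k => f r (a k)) (f r a0).
Proof. exact: (f_cont (rconv_cst r)). Qed.

Lemma f_contt (r : nat -> R) r0 a : rconv r r0 -> conv dist (fun k => f (r k) a) (f r0 a).
Proof. move=> h; exact: (f_cont h (conv_cst a)). Qed.

Lemma extract (u : nat -> X) : exists phi, sincr phi /\ exists l, conv dist (u \o phi) l.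
Proof. have [phi [h1 [l h2]]] := hc u; exists phi; split => //; exists l; exact: h2. Qed.

Lemma tube_closed s K : closedS dist K -> closedS dist (flow_tube f s K).
Proof.
move=> hK; apply: seq_closed => // u l hu hl.
have [r hr] := choice hu.
have hex : forall n, exists a, K a /\ f (r n) a = u n.
  by move=> n; case: (hr n).2 => a ? ?; exists a.
have [a ha] := choice hex.
have [phi1 [sp1 [r0 hr0 rc]]] := BW (fun n => (hr n).1).
have [phi2 [sp2 [a0 ac]]] := extract (a \o phi1).
have Ka0 : K a0 by apply: (closed_lim hm hK _ ac) => n; case: (ha (phi1 (phi2 n))).
have c1 : conv dist (fun k => f (r (phi1 (phi2 k))) (a (phi1 (phi2 k)))) (f r0 a0).
  by apply: f_cont => //; apply: (rconv_sub rc sp2).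
have c2 : conv dist (fun k => f (r (phi1 (phi2 k))) (a (phi1 (phi2 k)))) l.
  have := conv_sub hl (sincr_comp sp1 sp2) => h e /h [N HN]; exists N => n /HN /=.
  by case: (ha (phi1 (phi2 n))) => _ ->.
by exists r0; split => //; exists a0 => //; apply: (conv_uniq hm c1 c2).
Qed.

Definition Gbar (c : R) a y := forall t, dist (f t a) (f t y) <= c.
Definition Bad s c := [set a | exists y, Gbar c a y /\ ~ flow_tube f s [set a] y].
Definition Cset s c (d : R) := [set a | exists y, Gbar c a y /\
  forall r, -s <= r <= s -> d <= dist y (f r a)].

Lemma C_closed s c d : closedS dist (Cset s c d).
Proof.
apply: seq_closed => // u l hu hl.
have [y hy] := choice hu.
have [phi [sp [y0 yc]]] := extract y.
have hl' := conv_sub hl sp.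
exists y0; split.
- move=> t; apply: (dist_lim_le hm (f_contx t hl') (f_contx t yc)).
  by exists 0%N => n _; case: (hy (phi n)) => + _; apply.
- move=> r hr; apply: (dist_lim_ge hm yc (f_contx r hl')).
  by exists 0%N => n _; case: (hy (phi n)) => _; apply.
Qed.

Lemma Bad_eq s c : Bad s c = \bigcup_m Cset s c (m.+1%:R^-1).
Proof.
apply/seteqP; split => a.
- move=> [y [hg hnt]]; apply: contrapT => hnot; apply: hnt.
  have hex : forall m : nat, exists r, -s <= r <= s /\ dist y (f r a) < m.+1%:R^-1.
    move=> m; apply: contrapT => hn; apply: hnot; exists m => //; exists y; split => //.
    move=> r hr; rewrite leNgt; apply/negP => hlt; apply: hn; exists r; split => //.
  have [r hr] := choice hex.
  have [phi [sp [r0 hr0 rc]]] := BW (fun n => (hr n).1).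
  have c1 := f_contt a rc.
  have c2 : conv dist (fun k => f ((r \o phi) k) a) y.
    move=> e e0; have [N HN] := small_inv e0; exists N => n Nn /=.
    rewrite distC //; apply: lt_trans (hr (phi n)).2 (HN _ _).
    exact: leq_trans Nn (sincr_ge sp n).
  by exists r0; split => //; exists a => //; apply: (conv_uniq hm c1 c2).
- move=> [m _ [y [hg hd]]]; exists y; split => // [[r [hr [a' /= -> hy]]]].
  have := hd r hr; rewrite hy dist0 //; rewrite leNgt invr_gt0 ltr0n //.
Qed.

Lemma Bad_anti s c c' : c <= c' -> Bad s c `<=` Bad s c'.
Proof.
move=> cc a [y [hg hn]]; exists y; split => // t; exact: le_trans (hg t) cc.
Qed.

Lemma Bad_NE eps s a : 0 < eps -> 0 < s ->
  (forall n, Bad s (n.+1%:R^-1) a) -> NE dist f eps a.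
Proof.
move=> e0 s0 hB S S0 hsub.
have [N0 HN0] := small_inv e0.
have [y hy] := choice (fun n => hB (n + N0)%N).
have hG n : Gamma dist f eps a (y n).
  move=> t; apply: le_lt_trans ((hy n).1 t) (HN0 _ (leq_addl _ _)).
have [r hr] := choice (fun n => hsub _ (hG n)).
have hr1 n : f (r n) a = y n by case: (hr n) => _ [a' /= -> ->].
have [phi [sp [r0 hr0 rc]]] := BW (fun n => (hr n).1).
have c1 := f_contt a rc.
have c2 : conv dist (fun k => f ((r \o phi) k) a) a.
  move=> e ep; have [N HN] := small_inv ep; exists N => n Nn /=.
  rewrite hr1; have := (hy (phi n)).1 0; rewrite !flow0 distC // => h.
  apply: le_lt_trans h (HN _ _).
  exact: leq_trans Nn (leq_trans (sincr_ge sp n) (leq_addr _ _)).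
have fa : f r0 a = a by apply: (conv_uniq hm c1 c2).
have [N HN] := rc s s0.
apply: (hy (phi N)).2; exists (r (phi N) - r0); split.
  by have := HN N (leqnn N); rewrite ltr_norml /= => /andP[h1 h2]; apply/andP; split; lra.
by exists a => //; rewrite -{1}fa -flowD subrK hr1.
Qed.

Definition Sset K (c T : R) := [set z | exists a, K a /\
  forall r, -T <= r <= T -> dist (f r z) (f r a) <= c].

Lemma S_closed K c T : closedS dist K -> closedS dist (Sset K c T).
Proof.
move=> hK; apply: seq_closed => // u l hu hl.
have [a ha] := choice hu.
have [phi [sp [a0 ac]]] := extract a.
exists a0; split.
  by apply: (closed_lim hm hK _ ac) => n; case: (ha (phi n)).
move=> r hr; apply: (dist_lim_le hm (f_contx r (conv_sub hl sp)) (f_contx r ac)).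
by exists 0%N => n _; case: (ha (phi n)) => _; apply.
Qed.

Lemma S_cap K c s z : closedS dist K -> (forall a, K a -> ~ Bad s c a) ->
  (forall N : nat, Sset K c N%:R z) -> flow_tube f s K z.
Proof.
move=> hK hB hz.
have [a ha] := choice hz.
have [phi [sp [a0 ac]]] := extract a.
have Ka0 : K a0 by apply: (closed_lim hm hK _ ac) => n; case: (ha (phi n)).
have hg : Gbar c a0 z.
  move=> t; rewrite distC //.
  apply: (dist_lim_le hm (conv_cst (f t z)) (f_contx t ac)).
  exists (Num.truncn `|t|).+1 => n Nn; apply: (ha (phi n)).2.
  have h1 : (Num.truncn `|t|).+1%:R <= (phi n)%:R :> R.
    by rewrite ler_nat; apply: leq_trans Nn (sincr_ge sp n).
  have h2 := truncnS_gt `|t|.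
  have /andP[h3 h4] : - `|t| <= t <= `|t| by rewrite -ler_norml lexx.
  apply/andP; split; lra.
have : flow_tube f s [set a0] z.
  apply: contrapT => hn; apply: (hB a0 Ka0); exists z; split => //.
by case=> r [hr [a' /= -> <-]]; exists r; split => //; exists a0.
Qed.

End Flow.
Section Meas.
Context {R : realType} {disp : measure_display} {X : measurableType disp}.
Variable (dist : X -> X -> R) (mu : probability X R).
Hypothesis hm : is_metric dist.
Hypothesis hmeas : @measurable disp X = <<s mopen dist >>.

Lemma open_meas O : mopen dist O -> measurable O.
Proof. by move=> hO; rewrite hmeas; apply: sub_sigma_algebra. Qed.

Lemma closed_meas F : closedS dist F -> measurable F.
Proof. by move=> hF; rewrite -(setCK F); apply: measurableC; apply: open_meas. Qed.

Lemma mle (A B : set X) : measurable A -> measurable B -> A `<=` B -> (mu A <= mu B)%E.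
Proof. by move=> mA mB AB; apply: le_measure => //; rewrite inE. Qed.

Lemma mu_fin (A : set X) : measurable A -> (mu A < +oo)%E.
Proof. by move=> mA; apply: le_lt_trans (probability_le1 mu mA) _; rewrite ltry. Qed.

Lemma small_tail (F : nat -> set X) : (forall i, measurable (F i)) ->
  (forall n m, (n <= m)%N -> F m `<=` F n) -> mu (\bigcap_n F n) = 0%E ->
  forall d : R, 0 < d -> exists n, (mu (F n) < d%:E)%E.
Proof.
move=> mF ni h0 d d0.
have ni' : nonincreasing_seq F by move=> n m nm; rewrite subsetEset; apply: ni.
have := nonincreasing_cvg_mu (mu_fin (mF 0%N)) mF (bigcap_measurable _ (fun i _ => mF i)) ni'.
move=> /(_ (ex_intro _ 0%N I)) hc0.
have : (mu \o F) x @[x --> \oo] --> (0%E : \bar R).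
  exact: (eq_rect _ (fun v => (mu \o F) x @[x --> \oo] --> v) hc0 _ h0).
move=> /fine_cvgP [[N1 _ H1] hc].
move/cvgrPdist_lt: hc => /(_ d d0) [N2 _ H2].
exists (maxn N1 N2).
have f1 := H1 (maxn N1 N2) (leq_maxl _ _).
have f2 := H2 (maxn N1 N2) (leq_maxr _ _).
move: f1 f2 => /= f1; rewrite -(fineK f1) lte_fin sub0r normrN => f2.
exact: le_lt_trans (ler_norm _) f2.
Qed.

Lemma sum_small (D : nat -> set X) (e : R) : 0 <= e -> (forall i, measurable (D i)) ->
  (forall i, (mu (D i) <= (e / (2 ^ i.+1)%:R)%:E)%E) -> (mu (\bigcup_i D i) <= e%:E)%E.
Proof.
move=> e0 mD hD.
have h1 := measure_sigma_subadditive mu mD (bigcup_measurable (fun i _ => mD i)) (@subset_refl _ (\bigcup_i D i)).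
apply: le_trans h1 _.
apply: (@le_trans _ _ (\sum_(i <oo) (0%E + (e / (2 ^ i.+1)%:R)%:E))%E).
  by apply: lee_nneseries => [i _ _|i _]; [exact: measure_ge0|rewrite add0e; exact: hD].
apply: le_trans (epsilon_trick (A := fun _ : nat => 0%E) _ (fun _ => lexx _) e0) _.
by rewrite eseries0 ?add0e.
Qed.

Fixpoint funion (A : nat -> set X) n := if n is k.+1 then funion A k `|` A k else set0.

Lemma funionP A n x : funion A n x <-> exists i, (i < n)%N /\ A i x.
Proof.
elim: n => [|n IH] /=; first by split => // [[i []]].
split.
- case=> [/IH [i [h1 h2]]|h]; first by exists i; split => //; exact: ltnW.
  by exists n.
- case=> i [h1 h2]; move: h1; rewrite ltnS leq_eqVlt => /orP[/eqP ei|hi].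
    by right; rewrite -ei.
  by left; apply/IH; exists i.
Qed.

Lemma funion_meas A n : (forall i, measurable (A i)) -> measurable (funion A n).
Proof. by move=> mA; elim: n => //= n IH; apply: measurableU. Qed.

Lemma closedU A B : closedS dist A -> closedS dist B -> closedS dist (A `|` B).
Proof.
move=> hA hB x /= hx.
have nA : ~ A x by move=> h; apply: hx; left.
have nB : ~ B x by move=> h; apply: hx; right.
have [r1 r10 h1] := hA x nA; have [r2 r20 h2] := hB x nB.
exists (Num.min r1 r2); first by rewrite lt_min r10 r20.
move=> y /=; rewrite lt_min => /andP[y1 y2] [].
- by apply: h1.
- by apply: h2.
Qed.

Lemma funion_closed A n : (forall i, closedS dist (A i)) -> closedS dist (funion A n).
Proof.
move=> hA; elim: n => [|n IH] /=.
  by move=> x _; exists 1 => // y _ [].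
exact: closedU.
Qed.

Lemma bigcap_closed (A : nat -> set X) : (forall i, closedS dist (A i)) ->
  closedS dist (\bigcap_i A i).
Proof.
move=> hA x /= hx.
have [i hi] : exists i, ~ A i x.
  by apply: contrapT => hn; apply: hx => i _; apply: contrapT => h; apply: hn; exists i.
have [r r0 h] := hA i x hi; exists r => // y hy hy'; apply: (h y hy); exact: hy' i I.
Qed.

Definition good (M : set X) := measurable M /\ forall d : R, 0 < d ->
  (exists F, [/\ closedS dist F, F `<=` M & (mu (M `\` F) < d%:E)%E]) /\
  (exists F, [/\ closedS dist F, F `<=` ~` M & (mu (~` M `\` F) < d%:E)%E]).

Lemma closed_set0 : closedS dist set0.
Proof. by move=> x _; exists 1 => // y _ []. Qed.

Lemma closed_setT : closedS dist setT.
Proof. by move=> x []. Qed.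

Lemma good_sigma : sigma_algebra setT good.
Proof.
split.
- split => // d d0; split.
    exists set0; split => //; first exact: closed_set0.
    by rewrite setD0 measure0 lte_fin.
  exists setT; split; [exact: closed_setT|by move=> x _ []|].
  by rewrite setC0 setDv measure0 lte_fin.
- move=> A [mA hA]; rewrite setTD; split; first exact: measurableC.
  by move=> d d0; have [h1 h2] := hA d d0; rewrite setCK; split.
- move=> A hA; split; first by apply: bigcup_measurable => i _; case: (hA i).
  have mA i : measurable (A i) by case: (hA i).
  move=> d d0; split.
  + pose G n := \bigcup_i A i `\` funion A n.
    have mG n : measurable (G n).
      by apply: measurableD; [apply: bigcup_measurable => i _|exact: funion_meas].
    have [n0 Hn0] : exists n, (mu (G n) < (d / 2)%:E)%E.
      apply: small_tail => //; last by lra.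
      - move=> n m nm x [hx1 hx2]; split => // hx3; apply: hx2.
        move/funionP: hx3 => [i [hi1 hi2]]; apply/funionP; exists i; split => //.
        exact: leq_trans hi1 nm.
      - suff -> : \bigcap_n G n = set0 by rewrite measure0.
        apply/seteqP; split => // x hx; have [[i _ hi] _] := hx 0%N I.
        by case: (hx i.+1 I) => _; apply; apply/funionP; exists i.
    have hex i : exists F, [/\ closedS dist F, F `<=` A i &
        (mu (A i `\` F) < ((d / 4) / (2 ^ i.+1)%:R)%:E)%E].
      by case: (hA i) => _ /(_ ((d / 4) / (2 ^ i.+1)%:R)) [] // ; rewrite divr_gt0 //; lra.
    have [F hF] := choice hex.
    exists (funion F n0); split.
    * by apply: funion_closed => i; case: (hF i).
    * by move=> x /funionP [i [_ hi]]; exists i => //; case: (hF i) => _ /(_ x hi).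
    * have mF k : measurable (F k) by apply: closed_meas; case: (hF k).
      have mD i : measurable (A i `\` F i) by apply: measurableD.
      have sub : \bigcup_i A i `\` funion F n0 `<=` G n0 `|` \bigcup_i (A i `\` F i).
        move=> x [[i _ hi] hx]; have [hn|hn] := pselect (funion A n0 x).
          right; move/funionP: hn => [j [hj1 hj2]]; exists j => //; split => // hj3.
          by apply: hx; apply/funionP; exists j.
        by left; split => //; exists i.
      apply: le_lt_trans (mle _ _ sub) _.
      * by apply: measurableD; [apply: bigcup_measurable => i _|exact: funion_meas].
      * by apply: measurableU => //; apply: bigcup_measurable => i _.
      apply: le_lt_trans (measureU2 _ _ _) _ => //; first by apply: bigcup_measurable => i _.
      have hF3 i : (mu (A i `\` F i) <= (d / 4 / (2 ^ i.+1)%:R)%:E)%E.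
        by case: (hF i) => _ _ /ltW.
      have := sum_small (e := d / 4) ltac:(lra) mD hF3.
      move=> h2; have h3 : ((d / 4)%:E < (d / 2)%:E)%E by rewrite lte_fin; lra.
      apply: lt_le_trans (lteD Hn0 (le_lt_trans h2 h3)) _.
      by rewrite -EFinD lee_fin; lra.
  + have hex i : exists F, [/\ closedS dist F, F `<=` ~` A i &
        (mu (~` A i `\` F) < ((d / 2) / (2 ^ i.+1)%:R)%:E)%E].
      by case: (hA i) => _ /(_ ((d / 2) / (2 ^ i.+1)%:R)) [] // ; rewrite divr_gt0 //; lra.
    have [F hF] := choice hex.
    have mF i : measurable (F i) by apply: closed_meas; case: (hF i).
    exists (\bigcap_i F i); split.
    * by apply: bigcap_closed => i; case: (hF i).
    * move=> x hx [i _ hi]; by case: (hF i) => _ /(_ x (hx i I)) + _; apply.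
    * have mD i : measurable (~` A i `\` F i) by apply: measurableD => //; apply: measurableC.
      have sub : ~` (\bigcup_i A i) `\` \bigcap_i F i `<=` \bigcup_i (~` A i `\` F i).
        move=> x [hx1 hx2]; have [i hi] : exists i, ~ F i x.
          by apply: contrapT => hn; apply: hx2 => i _; apply: contrapT => h; apply: hn; exists i.
        by exists i => //; split => // hAi; apply: hx1; exists i.
      apply: le_lt_trans (mle _ _ sub) _.
      * apply: measurableD; first by apply: measurableC; apply: bigcup_measurable => i _.
        by apply: (bigcap_measurable (ex_intro _ 0%N I)) => i _.
      * by apply: bigcup_measurable => i _.
      have hF3 i : (mu (~` A i `\` F i) <= (d / 2 / (2 ^ i.+1)%:R)%:E)%E.
        by case: (hF i) => _ _ /ltW.
      apply: le_lt_trans (sum_small (e := d / 2) ltac:(lra) mD hF3) _.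
      by rewrite lte_fin; lra.
Qed.

Lemma open_good O : mopen dist O -> good O.
Proof.
move=> hO; split; first exact: open_meas.
move=> d d0; split.
- pose F k := [set x | forall y, dist x y < k.+1%:R^-1 -> O y].
  have cF k : closedS dist (F k).
    move=> x /= hx.
    have [y hy] : exists y, dist x y < k.+1%:R^-1 /\ ~ O y.
      apply: contrapT => hn; apply: hx => y hy; apply: contrapT => h; apply: hn; exists y.
      by split.
    exists (k.+1%:R^-1 - dist x y); first by case: hy => h _; rewrite subr_gt0.
    move=> z /= hz hFz; case: hy => h1 h2; apply: h2; apply: hFz.
    have := dist_tri hm z x y; rewrite (distC hm z x); move: hz h1; move: (k.+1%:R^-1) => q; lra.
  have FO k : F k `<=` O.
    by move=> x hx; apply: hx; rewrite dist0 // invr_gt0 ltr0n.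
  have mF k : measurable (F k) := closed_meas (cF k).
  have [n Hn] : exists n, (mu (O `\` F n) < d%:E)%E.
    apply: small_tail => //.
    + by move=> n; apply: measurableD => //; exact: open_meas.
    + move=> n m nm x [hx1 hx2]; split => // hx3; apply: hx2 => y hy; apply: hx3.
      apply: lt_le_trans hy _; rewrite lef_pV2 ?posrE ?ltr0n // ler_nat ltnS //.
    + suff -> : \bigcap_n (O `\` F n) = set0 by rewrite measure0.
      apply/seteqP; split => // x hx; have [hx1 _] := hx 0%N I.
      have [r r0 hr] := hO x hx1; have [N HN] := small_inv r0.
      case: (hx N I) => _; apply => y hy; apply: hr; apply: lt_trans hy (HN N (leqnn N)).
  by exists (F n); split.
- exists (~` O); split => //; first by rewrite /closedS setCK.
  by rewrite setDv measure0 lte_fin.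
Qed.

Lemma regular M : measurable M -> forall d : R, 0 < d ->
  exists F, [/\ closedS dist F, F `<=` M & (mu (M `\` F) < d%:E)%E].
Proof.
move=> mM d d0.
have : good M.
  move: mM; rewrite hmeas; apply: smallest_sub; first exact: good_sigma.
  exact: open_good.
by case=> _ /(_ d d0) [].
Qed.

End Meas.
Unset Implicit Arguments.

Theorem proposition4p1 (R : realType) (disp : measure_display)
  (X : measurableType disp) (dist : X -> X -> R) (f : R -> X -> X)
  (nu : probability X R) (eps s alpha : R) :
  is_metric dist -> mcompact dist ->
  @measurable disp X = <<s mopen dist >> ->
  is_cont_flow dist f ->
  (forall (t : R) (A : set X), measurable A -> nu (f t @^-1` A) = nu A) ->
  0 < eps -> negligible nu (NE dist f eps) ->
  0 < s -> 0 < alpha ->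
  exists2 rho0 : R, 0 < rho0 &
  forall rho : R, 0 < rho -> rho < rho0 -> rho < eps / 2 ->
  forall (E : R -> set X) (P : R -> set (set X)),
    (forall t : R, 0 < t ->
       max_separated dist f t rho (E t) /\ adapted dist f t rho (E t) (P t)) ->
  forall A : set X, measurable A -> (0 < nu A)%E ->
  forall kappa : R, 0 < kappa ->
  exists2 t0 : R, 0 < t0 &
  forall t : R, t0 <= t ->
  exists2 Q : set (set X), Q `<=` P t &
    let U := \bigcup_(B in Q) B in
    outer_lt nu (f (t / 2) @` U `\` flow_tube f (3 * s) A) kappa /\
    outer_lt nu (A `\` f (t / 2) @` U) alpha.
Proof.
move=> hm hc hmeas hf _ e0 hNE s0 al0.
pose B n := Bad dist f s (n.+1%:R^-1).
have mB n : measurable (B n).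
  rewrite /B (Bad_eq hm hf); apply: bigcup_measurable => m _.
  apply: (closed_meas hmeas); exact: (C_closed hm hc hf).
have [n Hn] : exists n, (nu (B n) < (alpha / 2)%:E)%E.
  apply: (small_tail mB); last by lra.
  - move=> n m nm; apply: Bad_anti.
    by rewrite lef_pV2 ?posrE ?ltr0n // ler_nat ltnS.
  - case: hNE => N [mN hN0 hsub].
    apply/eqP; rewrite eq_le measure_ge0 andbT -hN0; apply: (mle nu) => //.
      exact: (bigcap_measurable (ex_intro _ 0%N I)).
    move=> x hx; apply: hsub; apply: (Bad_NE hm hf) e0 s0 _ => k; exact: hx k I.
exists ((n.+1%:R)^-1 / 2); first by rewrite divr_gt0 // invr_gt0 ltr0n.
move=> rho rho0 rholt _ E P hEP A mA hA kappa k0.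
pose M := A `\` B n.
have mM : measurable M := measurableD mA (mB n).
have al2 : 0 < alpha / 2 by lra.
have [K [cK KM hK]] := regular nu hm hmeas mM al2.
have mK := closed_meas hmeas cK.
pose c := 2 * rho.
have Kgood : forall a, K a -> ~ Bad dist f s c a.
  move=> a Ka hb; have : B n a.
    apply: Bad_anti hb; rewrite /c; move: rholt; move: (n.+1%:R^-1) => q; lra.
  by have [_] := KM a Ka.
have cT : closedS dist (flow_tube f s K) := tube_closed hm hc hf cK.
pose S (N : nat) := Sset dist f K c N%:R `\` flow_tube f s K.
have mS N : measurable (S N).
  apply: measurableD. 2: exact: (@closed_meas R disp X dist hmeas _ cT).
  by apply: (closed_meas hmeas); apply: (S_closed hm hc hf).
have [N HN] : exists N, (nu (S N) < kappa%:E)%E.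
  apply: (small_tail mS) => //.
  - move=> n1 m1 nm z [[a [Ka ha]] hz]; split => //; exists a; split => // r /andP[hr1 hr2].
    have : n1%:R <= m1%:R :> R by rewrite ler_nat.
    move=> h; apply: ha; move: h hr1 hr2; move: (n1%:R) (m1%:R) => q1 q2.
    by move=> *; apply/andP; split; lra.
  - suff -> : \bigcap_N S N = set0 by rewrite measure0.
    apply/seteqP; split => // z hz; have [_ h] := hz 0%N I; apply: h.
    apply: (S_cap hm hc hf) cK Kgood _ => N'; by case: (hz N' I).
have N0 : (0 : R) <= N%:R by rewrite ler0n.
exists (2 * N%:R + 1); first by move: N0; move: (N%:R) => q; lra.
move=> t ht.
have t0 : 0 < t by move: N0 ht; move: (N%:R) => q; lra.
have [_ [[mP [disjP covP]] adP]] := hEP t t0.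
exists [set Bk | P t Bk /\ exists2 b, Bk b & K (f (t / 2) b)]; first by move=> Bk [].
split.
- exists (S N); split => //.
  move=> z [[u [Bk [PB [b Bb Kb]] uB] <-] hz].
  have [x _ [_ hcb]] := adP Bk PB.
  split.
  + exists (f (t / 2) b); split => // r /andP[hr1 hr2].
    rewrite -!(flowD hf).
    have hr' : 0 <= r + t / 2 <= t.
      by move: N0 ht hr1 hr2; move: (N%:R) => q *; apply/andP; split; lra.
    have h1 := hcb u uB _ hr'; have h2 := hcb b Bb _ hr'.
    have := dist_tri hm (f (r + t / 2) u) (f (r + t / 2) x) (f (r + t / 2) b).
    rewrite (distC hm (f (r + t / 2) u) (f (r + t / 2) x)) /c; lra.
  + move=> htube; apply: hz; move: htube => [r [/andP[hr1 hr2] [a Ka <-]]].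
    exists r; split; first by apply/andP; split; lra.
    by exists a => //; case: (KM a Ka).
- exists (A `\` K); split.
  + exact: measurableD.
  + move=> a [Aa nimg]; split => // Ka; apply: nimg.
    have : (\bigcup_(Bk in P t) Bk) (f (- (t / 2)) a) by rewrite covP.
    case=> Bk PB hb.
    have ea : f (t / 2) (f (- (t / 2)) a) = a by rewrite -(flowD hf) subrr (flow0 hf).
    exists (f (- (t / 2)) a); last exact: ea.
    exists Bk; last exact: hb.
    split; first exact: PB.
    by exists (f (- (t / 2)) a); last rewrite ea.
  + have sub : A `\` K `<=` B n `|` (M `\` K).
      move=> a [Aa nK]; have [hb|hb] := pselect (B n a); first by left.
      by right; split.
    apply: le_lt_trans (mle nu _ _ sub) _.
    * exact: measurableD.
    * by apply: measurableU => //; apply: measurableD.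
    apply: le_lt_trans (measureU2 _ _ _) _ => //; first by apply: measurableD.
    apply: lt_le_trans (lteD Hn hK) _.
    by rewrite -EFinD lee_fin; lra.
Qed.
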